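(* Let $R$ be a commutative ring with identity and $S$ a multiplicative subset of $R$. Let $\xi: 0\rightarrow A\xrightarrow{f} B\xrightarrow{g} C\rightarrow 0$ be a $u$-$S$-split short $u$-$S$-exact sequence of $R$-modules. Then $\xi$ is $u$-$S$-pure.
   Context: A multiplicative subset $S$ satisfies $1\in S$ and is closed under products. A short sequence $0\to A\xrightarrow{f}B\xrightarrow{g}C\to 0$ is $u$-$S$-exact if there is $s\in S$ with $s\,\mathrm{Ker}(f)=0$, $s\,\mathrm{Ker}(g)\subseteq\mathrm{Im}(f)$, $s\,\mathrm{Im}(f)\subseteq\mathrm{Ker}(g)$, $sC\subseteq\mathrm{Im}(g)$. Such a sequence is $u$-$S$-split if there are $s\in S$ and an $R$-homomorphism $t:B\to A$ with $tf=s\,\mathrm{Id}_A$. It is $u$-$S$-pure if for every $R$-module $M$ the induced sequence $0\rightarrow M\otimes_RA\rightarrow M\otimes_RB\rightarrow M\otimes_RC\rightarrow 0$ is $u$-$S$-exact. *)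

(* Defs.v *)
From HB Require Import structures.
From mathcomp Require Import all_boot all_order all_algebra.
Set Implicit Arguments. Unset Strict Implicit. Unset Printing Implicit Defensive.
Import GRing.Theory.
Local Open Scope ring_scope.

Definition multiplicative (R : comNzRingType) (S : R -> Prop) : Prop :=
  S 1 /\ (forall x y, S x -> S y -> S (x * y)).

Definition u_S_exact (R : comNzRingType) (S : R -> Prop) (A B C : lmodType R)
    (f : A -> B) (g : B -> C) : Prop :=
  exists2 s, S s &
    [/\ (forall a, f a = 0 -> s *: a = 0),
        (forall b, g b = 0 -> exists a, f a = s *: b),
        (forall a, g (s *: f a) = 0)
      & (forall c, exists b, g b = s *: c)].

Definition u_S_split (R : comNzRingType) (S : R -> Prop) (A B : lmodType R)
    (f : A -> B) : Prop :=
  exists2 s, S s & exists t : {linear B -> A}, forall a, t (f a) = s *: a.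

Definition bilinear_map (R : comNzRingType) (M A T : lmodType R)
    (h : M -> A -> T) : Prop :=
  (forall m r a a', h m (r *: a + a') = r *: h m a + h m a') /\
  (forall a r m m', h (r *: m + m') a = r *: h m a + h m' a).

Definition is_tensor_product (R : comNzRingType) (M A T : lmodType R)
    (t : M -> A -> T) : Prop :=
  bilinear_map t /\
  forall (W : lmodType R) (h : M -> A -> W), bilinear_map h ->
    (exists phi : {linear T -> W}, forall m a, phi (t m a) = h m a) /\
    (forall phi psi : {linear T -> W},
        (forall m a, phi (t m a) = psi (t m a)) -> forall x, phi x = psi x).

(* u-S-purity: for every R-module M, for tensor products M(x)A, M(x)B, M(x)C,
   and the induced maps 1(x)f, 1(x)g (characterised by their values on pure
   tensors; they exist and are unique), the tensored sequence is u-S-exact. *)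
Definition u_S_pure (R : comNzRingType) (S : R -> Prop) (A B C : lmodType R)
    (f : A -> B) (g : B -> C) : Prop :=
  forall (M TA TB TC : lmodType R) (tA : M -> A -> TA) (tB : M -> B -> TB)
         (tC : M -> C -> TC),
    is_tensor_product tA -> is_tensor_product tB -> is_tensor_product tC ->
    forall (F : {linear TA -> TB}) (G : {linear TB -> TC}),
      (forall m a, F (tA m a) = tB m (f a)) ->
      (forall m b, G (tB m b) = tC m (g b)) ->
      u_S_exact S F G.

(* Main.v *)
Require Import Defs.
From HB Require Import structures.
From mathcomp Require Import all_boot all_order all_algebra.
Set Implicit Arguments. Unset Strict Implicit.
Module Aux.
Import GRing.Theory.
Local Open Scope ring_scope.

Definition mklin (R : comNzRingType) (U V : lmodType R) (f : U -> V)
  (H : linear f) : {linear U -> V} :=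
  HB.pack f (GRing.isLinear.Build R U V *:%R f H).

Lemma tp_ex (R : comNzRingType) (M A T W : lmodType R) (t : M -> A -> T)
  (h : M -> A -> W) : is_tensor_product t -> bilinear_map h ->
  exists phi : {linear T -> W}, forall m a, phi (t m a) = h m a.
Proof. by move=> [_ H] Hh; case: (H W h Hh). Qed.

Lemma tp_uniq (R : comNzRingType) (M A T W : lmodType R) (t : M -> A -> T)
  (phi psi : T -> W) : is_tensor_product t -> linear phi -> linear psi ->
  (forall m a, phi (t m a) = psi (t m a)) -> forall x, phi x = psi x.
Proof.
move=> [Hb H] Lp Lq E x.
have [_ U] := H W (fun _ _ => 0) (conj (fun _ _ _ _ => etrans (esym (addr0 _)) (congr1 (fun z => z + 0) (esym (scaler0 _ _))))
   (fun _ _ _ _ => etrans (esym (addr0 _)) (congr1 (fun z => z + 0) (esym (scaler0 _ _))))).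
exact: (U (mklin Lp) (mklin Lq) E x).
Qed.

Lemma tp_lin (R : comNzRingType) (M A T : lmodType R) (t : M -> A -> T) m :
  is_tensor_product t -> linear (t m).
Proof. by move=> [[H1 _] _] r u v; rewrite H1. Qed.

Lemma tZr (R : comNzRingType) (M A T : lmodType R) (t : M -> A -> T) m r a :
  is_tensor_product t -> t m (r *: a) = r *: t m a.
Proof. by move=> Ht; exact: (linearZ_LR (mklin (tp_lin m Ht))). Qed.

Lemma tBr (R : comNzRingType) (M A T : lmodType R) (t : M -> A -> T) m a b :
  is_tensor_product t -> t m (a - b) = t m a - t m b.
Proof. by move=> Ht; exact: (linearB (mklin (tp_lin m Ht))). Qed.

Lemma t0r (R : comNzRingType) (M A T : lmodType R) (t : M -> A -> T) m :
  is_tensor_product t -> t m 0 = 0.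
Proof. by move=> Ht; exact: (linear0 (mklin (tp_lin m Ht))). Qed.

Lemma lin_id (R : comNzRingType) (U : lmodType R) : linear (fun x : U => x).
Proof. by []. Qed.

Lemma lin_scale (R : comNzRingType) (U V : lmodType R) (h : U -> V) k :
  linear h -> linear (fun x => k *: h x).
Proof. by move=> L r x y; rewrite L scalerDr !scalerA mulrC. Qed.

Lemma lin_sub (R : comNzRingType) (U V : lmodType R) (h1 h2 : U -> V) :
  linear h1 -> linear h2 -> linear (fun x => h1 x - h2 x).
Proof.
move=> L1 L2 r x y; rewrite L1 L2 scalerBr opprD !addrA; congr (_ + _).
by rewrite addrAC.
Qed.

Lemma bil_comp (R : comNzRingType) (M A A' T : lmodType R) (t : M -> A' -> T)
  (l : A -> A') : is_tensor_product t -> linear l ->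
  bilinear_map (fun m a => t m (l a)).
Proof.
move=> Ht Ll; have [[H1 H2] _] := Ht; split.
  by move=> m r a a'; rewrite Ll H1.
by move=> a r m m'; rewrite H2.
Qed.

Lemma main_aux (R : comNzRingType) (S : R -> Prop)
    (A B C : lmodType R) (f : {linear A -> B}) (g : {linear B -> C}) :
  Defs.multiplicative S ->
  u_S_exact S f g ->
  u_S_split S f ->
  u_S_pure S f g.
Proof.
move=> [S1 SM] [s0 Ss0 [k0 kg0 im0 su0]] [s1 Ss1 [t tf]].
move=> M TA TB TC tA tB tC HA HB HC F G HF HG.
pose e := fun b => s1 *: b - f (t b).
have Le : linear e.
  move=> r x y; rewrite /e (linearP t) (linearP f) scalerDr scalerBr !scalerA mulrC.
  by rewrite opprD !addrA; congr (_ + _); rewrite addrAC.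
have ef : forall a, e (f a) = 0 by move=> a; rewrite /e tf linearZ subrr.
have eZ : forall r b, e (r *: b) = r *: e b by move=> r b; exact: (linearZ_LR (mklin Le)).
have eB : forall a b, e (a - b) = e a - e b by move=> a b; exact: (linearB (mklin Le)).
have ker : forall d, g d = 0 -> s0 *: e d = 0.
  by move=> d /kg0 [a Ha]; rewrite -eZ -Ha ef.
have su0' : forall c, exists b, g b == s0 *: c.
  by move=> c; have [b Hb] := su0 c; exists b; apply/eqP.
pose bc := fun c => xchoose (su0' c).
have bcP : forall c, g (bc c) = s0 *: c by move=> c; exact/eqP/(xchooseP (su0' c)).
pose u := fun c => s0 *: e (bc c).
have gf0 : forall a, s0 *: g (f a) = 0 by move=> a; rewrite -linearZ.
have Lu : linear u.
  move=> r c c'; rewrite /u.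
  set d := bc (r *: c + c') - (r *: bc c + bc c').
  have gd : g d = 0.
    by rewrite /d linearB linearP !bcP scalerDr !scalerA mulrC subrr.
  have := ker d gd; rewrite /d eB Le.
  rewrite scalerBr => /eqP; rewrite subr_eq0 => /eqP ->.
  by rewrite scalerDr !scalerA mulrC.
have uZ : forall r c, u (r *: c) = r *: u c by move=> r c; exact: (linearZ_LR (mklin Lu)).
have ug : forall b, u (g b) = (s0 * s0) *: e b.
  move=> b; rewrite /u.
  have gd : g (bc (g b) - s0 *: b) = 0 by rewrite linearB linearZ bcP subrr.
  have := ker _ gd; rewrite eB scalerBr eZ => /eqP; rewrite subr_eq0 => /eqP ->.
  by rewrite scalerA.
have gu : forall c, g (u c) = (s0 * s0 * s1) *: c.
  move=> c; rewrite /u /e !linearZ_LR linearB !linearZ_LR /= scalerBr gf0 subr0 bcP.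
  by rewrite !scalerA mulrC mulrA.
have [T HT] := tp_ex HB (bil_comp HA (linearP t)).
have [U HU] := tp_ex HC (bil_comp HB Lu).
exists (s0 * s0 * s1); first by apply: (SM) => //; apply: (SM).
have TF : forall x, T (F x) = s1 *: x.
  apply: (tp_uniq HA).
  - by move=> r y z; rewrite !linearP.
  - by move=> r y z; rewrite scalerDr !scalerA mulrC.
  by move=> m a; rewrite HF HT tf tZr.
split.
- move=> x Fx; rewrite -scalerA -TF Fx linear0 scaler0 //.
- move=> y Gy.
  have UG : forall x, U (G x) = (s0 * s0) *: (s1 *: x - F (T x)).
    apply: (tp_uniq HB).
    + by move=> r x z; rewrite !linearP.
    + apply: lin_scale; apply: lin_sub; first by move=> r x z; rewrite scalerDr !scalerA mulrC.
      by move=> r x z; rewrite !linearP.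
    + move=> m b; rewrite /= HG HU ug tZr // HT HF.
      by rewrite /e tBr // tZr.
  have := UG y; rewrite Gy linear0 => /esym /eqP.
  rewrite scalerBr subr_eq0 => /eqP E.
  by exists ((s0 * s0) *: T y); rewrite linearZ_LR /= -E scalerA.
- move=> x.
  have GF : forall x, s0 *: G (F x) = 0.
    apply: (tp_uniq HA (psi := fun _ => 0)).
    + by apply: lin_scale => r y z; rewrite !linearP.
    + by move=> r y z; rewrite scaler0 addr0.
    by move=> m a; rewrite HF HG -tZr // gf0 t0r.
  by rewrite !linearZ_LR /= -mulrA mulrC -scalerA GF scaler0.
- move=> z; exists (U z); move: z; apply: (tp_uniq HC).
  + by move=> r y z; rewrite !linearP.
  + by move=> r y z; rewrite scalerDr !scalerA mulrC.
  by move=> m c; rewrite /= HU HG gu tZr.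
Qed.
End Aux.

Theorem proposition2p3 (R : comNzRingType) (S : R -> Prop)
    (A B C : lmodType R) (f : {linear A -> B}) (g : {linear B -> C}) :
  multiplicative S ->
  u_S_exact S f g ->
  u_S_split S f ->
  u_S_pure S f g.
Proof. exact: Aux.main_aux. Qed.
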